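(* Let $n\ge4$ be even. Let $G$ have node set $\{w_0,w_1,\dots,w_{n/2}\}\cup W'$ with $|W'|=n/2-1$ (disjoint), and edges $(w_i,w_{i-1})$ for $1\le i\le n/2$ together with $(w_i,x)$ for every $1\le i\le n/2$ and every $x\in W'$ (so $d_+(w_i)=n/2$ for $1\le i\le n/2$). Consider the \textsc{Random Pick} process from the initial state in which only $w_0$ is colored. Then with probability at least $1-8/n$, the convergence time is at least $n^2/8$.
   Context: A state is a map $V\to\{b,r,u\}$ (blue, red, uncolored); colored means blue or red. \textsc{Random Pick} process: in each round $t$ every node with at least one out-neighbor picks an out-neighbor uniformly at random, independently; an uncolored node adopts the color of its pick if the pick is colored, and all other nodes keep their color. A state is stable if no uncolored node has a colored out-neighbor; the convergence time is the first round $t\ge0$ at which the state is stable. *)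

(* Defs.v *)
From mathcomp Require Import all_boot all_order all_algebra.
Set Implicit Arguments. Unset Strict Implicit. Unset Printing Implicit Defensive.
Import GRing.Theory Num.Theory.

Inductive color := Blue | Red | Uncolored.
Definition colored (c : color) : bool :=
  match c with Uncolored => false | _ => true end.

(* A directed graph on a finite node type V is a relation E; E v w means
   w is an out-neighbor of v. *)
Definition has_out (V : finType) (E : rel V) (v : V) : bool := [exists w, E v w].

(* One round of Random Pick, given the picks p (p v is the out-neighbor
   picked by v; irrelevant for nodes without out-neighbors). *)
Definition step (V : finType) (E : rel V) (s : V -> color) (p : V -> V) : V -> color :=
  fun v => if ~~ colored (s v) && has_out E v && colored (s (p v))
           then s (p v) else s v.

Definition stable (V : finType) (E : rel V) (s : V -> color) : bool :=
  [forall v, forall w, (~~ colored (s v) && E v w) ==> ~~ colored (s w)].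

Definition valid_pick (V : finType) (E : rel V) (p : {ffun V -> V}) : bool :=
  [forall v, if has_out E v then E v (p v) else p v == v].

(* Sample space of the picks of the first N rounds (round k+1 uses f k).
   The uniform measure on this set is exactly the product of independent
   uniform picks. *)
Definition pick_seqs (V : finType) (E : rel V) (N : nat)
  : {set {ffun 'I_N -> {ffun V -> V}}} :=
  [set f : {ffun 'I_N -> {ffun V -> V}} | [forall i : 'I_N, valid_pick E (f i)]].

Definition round_pick (V : finType) (N : nat) (f : {ffun 'I_N -> {ffun V -> V}})
  (k : nat) : V -> V :=
  match (insub k : option 'I_N) with Some i => (f i : V -> V) | None => id end.

Fixpoint state_at (V : finType) (E : rel V) (N : nat) (s0 : V -> color)
  (f : {ffun 'I_N -> {ffun V -> V}}) (t : nat) : V -> color :=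
  match t with
  | 0 => s0
  | t'.+1 => step E (state_at E s0 f t') (round_pick f t')
  end.

Definition prob (V : finType) (E : rel V) (N : nat)
  (A : pred {ffun 'I_N -> {ffun V -> V}}) : rat :=
  (#|[set f in pick_seqs E N | A f]|%:R / #|pick_seqs E N|%:R)%R.

(* The graph of the theorem on node set 'I_n: node i (0 <= i <= n/2) is w_i,
   nodes n/2+1 .. n-1 form W' (n/2 - 1 nodes). *)
Definition GE (n : nat) : rel 'I_n :=
  fun v w => (0 < v) && (v <= n./2) && ((w.+1 == v) || (n./2 < w)).

Definition init (n : nat) : 'I_n -> color :=
  fun v => if nat_of_ord v == 0 then Blue else Uncolored.

(* Event "convergence time >= n^2/8": the state is not stable at every
   round t with t < n^2/8 (horizon n^2 rounds suffices). *)
Definition slow_event (n : nat) : pred {ffun 'I_(n ^ 2) -> {ffun 'I_n -> 'I_n}} :=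
  fun f => [forall t : 'I_(n ^ 2), (8 * t < n ^ 2) ==> ~~ stable (@GE n) (state_at (@GE n) (@init n) f t)].

(* Main.v *)
Require Import Defs.
From mathcomp Require Import all_boot all_order all_algebra.
From mathcomp Require Import zify ring lra.
Import Order.TTheory GRing.Theory Num.Theory.
Set Implicit Arguments. Unset Strict Implicit. Unset Printing Implicit Defensive.
Local Open Scope ring_scope.

Definition upd (I T : finType) (f : {ffun I -> T}) (i : I) (x : T) : {ffun I -> T} :=
  [ffun j => if j == i then x else f j].

Lemma upd_sum (I T : finType) (D : I -> pred T) (i : I) (F : {ffun I -> T} -> rat) :
  \sum_(f : {ffun I -> T} | [forall j, D j (f j)]) \sum_(x | D i x) F (upd f i x) =
  #|[pred x | D i x]|%:R * \sum_(f : {ffun I -> T} | [forall j, D j (f j)]) F f.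
Proof.
rewrite pair_big /=.
pose h (u : {ffun I -> T} * T) := (upd u.1 i u.2, u.1 i).
have hK : involutive h.
  case=> f x; rewrite /h /=; congr pair; last by rewrite ffunE eqxx.
  by apply/ffunP=> j; rewrite !ffunE; case: eqP => // ->.
rewrite (reindex_inj (inv_inj hK)) /=.
transitivity (\sum_(p : {ffun I -> T} * T | [forall j, D j (p.1 j)] && D i p.2) F p.1).
  apply: eq_big => -[f x] /=.
    rewrite /h /=.
    apply/andP/andP => -[/forallP H1 H2]; split.
    - apply/forallP=> j; case: (eqVneq j i) => [->//|nji].
      by have := H1 j; rewrite /upd ffunE (negbTE nji).
    - by have := H1 i; rewrite /upd ffunE eqxx.
    - apply/forallP=> j; rewrite /upd ffunE; case: eqP => [->//|_].
      by apply: H1.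
    - by apply: H1.
  move=> _; congr F; apply/ffunP=> j; rewrite /h /upd /= !ffunE; case: eqP => // ->.
  done.
rewrite -(pair_big (fun f : {ffun I -> T} => [forall j, D j (f j)]) (D i) (fun f _ => F f)) /=.
rewrite mulr_sumr; apply: eq_bigr => f _.
by rewrite sumr_const mulr_natl.
Qed.

Definition col (b : bool) : color := if b then Blue else Uncolored.

Lemma colored_col b : colored (col b) = b.
Proof. by case: b. Qed.

Definition succ k (p : 'I_k.+1 -> 'I_k.+1) (j : nat) : bool :=
  p (inord j.+1) == inord j.

Lemma has_outE k (v : 'I_k.+1) : has_out (@GE k.+1) v -> (0 < nat_of_ord v <= k.+1./2)%N.
Proof. by case/existsP=> w; rewrite /GE => /andP[/andP[-> ->]]. Qed.

Lemma step_cnt k (s : 'I_k.+1 -> color) (p : 'I_k.+1 -> 'I_k.+1) c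
  (hmk : (k.+1./2 <= k)%N) (hm : (0 < k.+1./2)%N)
  (Hp : forall v, @GE k.+1 v (p v) || (p v == v))
  (Hs : forall v, s v = col (nat_of_ord v <= minn c k.+1./2)%N) (v : 'I_k.+1) :
  step (@GE k.+1) s p v =
    col (nat_of_ord v <= minn (c + succ p (minn c k.+1./2.-1)) k.+1./2)%N.
Proof.
set m := k.+1./2 in hmk hm Hs *.
rewrite /step !Hs !colored_col.
have Hpv := Hp v.
case: (leqP m c) => hc.
  rewrite (minn_idPr (leq_trans hc (leq_addr _ _))).
  case: (leqP (nat_of_ord v) m) => hx /=; first by [].
  case hh: (has_out _ v) => //=.
by case/andP: (has_outE hh) => _; rewrite -/m => H1; exfalso; lia.
have hc1 : (minn c m = c)%N by apply/minn_idPl; lia.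
have hc2 : (minn c m.-1 = c)%N by apply/minn_idPl; lia.
rewrite ?hc1 hc2.
have hc3 : (minn (c + succ p c) m = c + succ p c)%N.
  by apply/minn_idPl; case: (succ p c) => /=; lia.
rewrite hc3.
case: (leqP (nat_of_ord v) c) => hx /=.
  by rewrite /col (leq_trans hx (leq_addr _ _)).
case hh: (has_out _ v) => /=.
  case: (leqP (nat_of_ord (p v)) c) => hy /=.
    move: Hpv; rewrite /GE => /orP[/andP[_ /orP[/eqP hy1|hy1]]|/eqP hy1]; last first.
    - by move: hy; rewrite hy1 => hy; exfalso; lia.
    - by move: hy1; rewrite -/m => hy1; exfalso; lia.
    have ev : v = inord c.+1 by apply/val_inj; rewrite /= inordK; lia.
    have epv : p v = inord c by apply/val_inj; rewrite /= inordK; lia.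
    rewrite /succ -ev epv eqxx addn1 /=. by rewrite /col ev inordK ?leqnn //; lia.
  rewrite /col; case hb: (succ p c); last by rewrite addn0 leqNgt hx.
  case: (eqVneq (nat_of_ord v) c.+1) => hv; last by rewrite addn1 leqNgt ltn_neqAle eq_sym hv hx.
  have ev : v = inord c.+1 by apply/val_inj; rewrite /= inordK; lia.
  move: hb; rewrite /succ -ev => /eqP epv.
  by move: hy; rewrite epv inordK ?ltnn //; lia.
rewrite /col; case hb: (succ p c); last by rewrite addn0 leqNgt hx.
case: (eqVneq (nat_of_ord v) c.+1) => hv; last by rewrite addn1 leqNgt ltn_neqAle eq_sym hv hx.
have ev : v = inord c.+1 by apply/val_inj; rewrite /= inordK; lia.
move: hh; rewrite ev => /existsP[]; exists (inord c).
rewrite /GE !inordK; lia.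
Qed.

Fixpoint cnt k N (f : {ffun 'I_N -> {ffun 'I_k.+1 -> 'I_k.+1}}) (t : nat) : nat :=
  match t with
  | 0 => 0
  | t'.+1 => cnt f t' + succ (round_pick f t') (minn (cnt f t') k.+1./2.-1)
  end.

Lemma round_valid k N (f : {ffun 'I_N -> {ffun 'I_k.+1 -> 'I_k.+1}})
  (hf : f \in pick_seqs (@GE k.+1) N) t (v : 'I_k.+1) :
  @GE k.+1 v (round_pick f t v) || (round_pick f t v == v).
Proof.
rewrite /round_pick; case: insubP => [i _ _|_]; last by rewrite eqxx orbT.
move: hf; rewrite inE => /forallP/(_ i)/forallP/(_ v).
by case: (has_out _ v) => [->//|->]; rewrite orbT.
Qed.

Lemma state_cnt k N (f : {ffun 'I_N -> {ffun 'I_k.+1 -> 'I_k.+1}})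
  (hk : (3 <= k)%N) (hf : f \in pick_seqs (@GE k.+1) N) t (v : 'I_k.+1) :
  state_at (@GE k.+1) (@init k.+1) f t v = col (nat_of_ord v <= minn (cnt f t) k.+1./2)%N.
Proof.
elim: t v => [|t IH] v /=.
  by rewrite /init /col min0n leqn0.
apply: step_cnt => //.
- by case: k hk {f hf IH v} => // k _; lia.
- by case: k hk {f hf IH v} => // k _; lia.
- by move=> w; apply: round_valid.
Qed.

Lemma round_pick_upd k N (f : {ffun 'I_N -> {ffun 'I_k.+1 -> 'I_k.+1}}) (i : 'I_N) p s :
  (s < i)%N -> round_pick (upd f i p) s = round_pick f s.
Proof.
move=> hs; rewrite /round_pick; case: insubP => [j _ ej|//].
rewrite /upd ffunE; case: eqP => // eji.
by move: hs; rewrite -ej eji ltnn.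
Qed.

Lemma round_pick_upd_eq k N (f : {ffun 'I_N -> {ffun 'I_k.+1 -> 'I_k.+1}}) (i : 'I_N) p :
  round_pick (upd f i p) i = p.
Proof. by rewrite /round_pick valK /upd ffunE eqxx. Qed.

Lemma cnt_upd k N (f : {ffun 'I_N -> {ffun 'I_k.+1 -> 'I_k.+1}}) (i : 'I_N) p s :
  (s <= i)%N -> cnt (upd f i p) s = cnt f s.
Proof.
elim: s => [//|s IH] hs /=.
by rewrite IH ?(ltnW hs) // round_pick_upd.
Qed.

Lemma cnt_upd_eq k N (f : {ffun 'I_N -> {ffun 'I_k.+1 -> 'I_k.+1}}) (i : 'I_N) p :
  cnt (upd f i p) i.+1 = (cnt f i + succ p (minn (cnt f i) k.+1./2.-1))%N.
Proof. by rewrite /= cnt_upd // round_pick_upd_eq. Qed.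

Lemma card_ordP K (P : pred nat) : #|[pred x : 'I_K | P x]| = (\sum_(0 <= x < K) (P x : nat))%N.
Proof.
rewrite -sum1_card big_mkord big_mkcond /=; apply: eq_bigr => i _.
by rewrite inE; case: (P i).
Qed.

Lemma sum_gt K m : (\sum_(0 <= x < K) (m < x : nat))%N = (K - m.+1)%N.
Proof.
elim: K => [|K IH]; first by rewrite big_geq.
rewrite big_nat_recr //= IH; case: (ltnP m K) => /= h; lia.
Qed.

Lemma sum_eq K j : (\sum_(0 <= x < K) (x == j : nat))%N = (j < K : nat).
Proof.
elim: K => [|K IH]; first by rewrite big_geq.
rewrite big_nat_recr //= IH; case: (ltngtP j K) => h /=; lia.
Qed.

Definition Dv k (v w : 'I_k.+1) : bool :=
  if has_out (@GE k.+1) v then @GE k.+1 v w else w == v.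

Lemma card_Dv k j (hk : (3 <= k)%N) (hodd : odd k) (hj : (j.+1 <= k.+1./2)%N) :
  #|[pred x | Dv (inord j.+1 : 'I_k.+1) x]| = k.+1./2.
Proof.
set m := k.+1./2 in hj *.
have hjk : (j < k)%N by lia.
have ho : has_out (@GE k.+1) (inord j.+1).
  apply/existsP; exists (inord j); rewrite /GE !inordK; lia.
rewrite /Dv ho.
transitivity #|[pred x : 'I_k.+1 | ((nat_of_ord x == j) || (m < x))%N]|.
  apply: eq_card => x; rewrite !inE /GE inordK; last lia.
  rewrite -/m; have -> : (0 < j.+1 <= m)%N by lia.
  by rewrite eqSS.
rewrite (card_ordP k.+1 (fun x => (x == j) || (m < x))%N).
transitivity (\sum_(0 <= x < k.+1) ((x == j : nat) + (m < x : nat)))%N.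
  apply: eq_bigr => x _; case: (eqVneq x j) => [->|] /=; last by [].
  by have -> : (m < j)%N = false by lia.
rewrite big_split /= sum_eq sum_gt.
have -> : (j < k.+1)%N by lia.
have hk2 := odd_double_half k; rewrite hodd in hk2; rewrite /m; lia.
Qed.


Lemma card_sumr (T : finType) (P : pred T) :
  #|[pred x | P x]|%:R = \sum_(x | P x) (1 : rat).
Proof. by rewrite -sum1_card natr_sum. Qed.

Lemma succ_count k j (hk : (3 <= k)%N) (hodd : odd k) (hj : (j.+1 <= k.+1./2)%N) :
  \sum_(p : {ffun 'I_k.+1 -> 'I_k.+1} | valid_pick (@GE k.+1) p) (1 : rat) =
  (k.+1./2)%:R * \sum_(p : {ffun 'I_k.+1 -> 'I_k.+1} | valid_pick (@GE k.+1) p) (succ p j)%:R.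
Proof.
have := upd_sum (@Dv k) (inord j.+1) (fun p => (succ p j)%:R).
rewrite card_Dv // => <-.
apply: eq_bigr => p _.
have hjk : (j < k)%N by lia.
rewrite (bigD1 (inord j)) /=; last first.
  rewrite /Dv.
  have ho : has_out (@GE k.+1) (inord j.+1).
    by apply/existsP; exists (inord j); rewrite /GE !inordK; lia.
  by rewrite ho /GE !inordK; lia.
rewrite /succ /upd ffunE eqxx eqxx big1 ?addr0 // => x /andP[_ /negbTE].
by rewrite ffunE eqxx => ->.
Qed.

Lemma valid_exists k : exists p : {ffun 'I_k.+1 -> 'I_k.+1}, valid_pick (@GE k.+1) p.
Proof.
exists [ffun v => odflt v [pick w | @GE k.+1 v w]].
apply/forallP=> v; rewrite ffunE.
case: pickP => [w hw|hn] /=.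
  by case: ifP => // /existsP[]; exists w.
case: ifP => // /existsP[w]; by rewrite hn.
Qed.

Lemma Ex_step k N (hk : (3 <= k)%N) (hodd : odd k) (h : nat -> rat) t (ht : (t < N)%N) :
  \sum_(f in pick_seqs (@GE k.+1) N) h (cnt f t.+1) =
  (1 - (k.+1./2)%:R^-1) * \sum_(f in pick_seqs (@GE k.+1) N) h (cnt f t) +
  (k.+1./2)%:R^-1 * \sum_(f in pick_seqs (@GE k.+1) N) h (cnt f t).+1.
Proof.
set m := k.+1./2.
have hm : (2 <= m)%N by rewrite /m; lia.
have mR : (m%:R : rat) != 0 by rewrite pnatr_eq0; lia.
set NP := \sum_(p : {ffun 'I_k.+1 -> 'I_k.+1} | valid_pick (@GE k.+1) p) (1 : rat).
have NP0 : NP != 0.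
  have [p0 hp0] := valid_exists k.
  by rewrite /NP -card_sumr pnatr_eq0 -lt0n; apply/card_gt0P; exists p0.
set i : 'I_N := Ordinal ht.
have key := upd_sum (fun (_ : 'I_N) (p : {ffun 'I_k.+1 -> 'I_k.+1}) => valid_pick (@GE k.+1) p) i
  (fun f => h (cnt f t.+1)).
rewrite card_sumr -/NP in key.
have eqS : forall F : {ffun 'I_N -> {ffun 'I_k.+1 -> 'I_k.+1}} -> rat,
    \sum_(f in pick_seqs (@GE k.+1) N) F f = \sum_(f : {ffun 'I_N -> {ffun 'I_k.+1 -> 'I_k.+1}} | [forall j, valid_pick (@GE k.+1) (f j)]) F f.
  by move=> F; apply: eq_bigl => f; rewrite inE.
rewrite !eqS.
apply: (mulfI NP0).
rewrite -key.
rewrite mulrDr !mulr_sumr -big_split.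
apply: eq_bigr => f _.
set g := minn (cnt f t) m.-1.
have hS : \sum_(p : {ffun 'I_k.+1 -> 'I_k.+1} | valid_pick (@GE k.+1) p) (succ p g)%:R = NP / m%:R.
  rewrite /NP (succ_count (j:=g)) -/m //; first by field. rewrite /g; lia.
transitivity (\sum_(p : {ffun 'I_k.+1 -> 'I_k.+1} | valid_pick (@GE k.+1) p)
   ((succ p g)%:R * h (cnt f t).+1 + (1 - (succ p g)%:R) * h (cnt f t))).
  apply: eq_bigr => p _.
  have -> : cnt (upd f i p) t.+1 = (cnt f t + succ p g)%N by exact: (cnt_upd_eq f i p).
  by case: (succ p g); rewrite /= ?addn1 ?addn0 ?mul1r ?mul0r ?subrr ?subr0 ?addr0 ?add0r.
rewrite big_split /= -!mulr_suml sumrB -/NP hS.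
by field.
Qed.

Lemma moments k N (hk : (3 <= k)%N) (hodd : odd k) t : (t <= N)%N ->
  let W := \sum_(f in pick_seqs (@GE k.+1) N) (1 : rat) in
  let q := (k.+1./2)%:R^-1 : rat in
  \sum_(f in pick_seqs (@GE k.+1) N) (cnt f t)%:R = t%:R * q * W /\
  \sum_(f in pick_seqs (@GE k.+1) N) ((cnt f t)%:R ^+ 2) =
     (t%:R * q + t%:R * (t%:R - 1) * q ^+ 2) * W.
Proof.
move=> + W q.
elim: t => [_|t IH ht].
  by split; rewrite big1 ?mul0r ?mulr0 ?add0r // => f _; rewrite /= expr0n.
have [IH1 IH2] := IH (ltnW ht).
have e1 : \sum_(f in pick_seqs (@GE k.+1) N) ((cnt f t).+1)%:R =
   \sum_(f in pick_seqs (@GE k.+1) N) (cnt f t)%:R + W.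
  by rewrite -big_split; apply: eq_bigr => f _; rewrite -natr1.
have e2 : \sum_(f in pick_seqs (@GE k.+1) N) ((cnt f t).+1)%:R ^+ 2 =
   \sum_(f in pick_seqs (@GE k.+1) N) ((cnt f t)%:R ^+ 2) +
   2 * \sum_(f in pick_seqs (@GE k.+1) N) (cnt f t)%:R + W.
  rewrite mulr_sumr -!big_split; apply: eq_bigr => f _; rewrite -natr1 /=; ring.
split.
  rewrite (Ex_step hk hodd (fun x => x%:R) ht) e1 IH1 -/q -natr1; ring.
rewrite (Ex_step hk hodd (fun x => x%:R ^+ 2) ht) e2 IH1 IH2 -/q -natr1; ring.
Qed.

Lemma cnt_mono k N (f : {ffun 'I_N -> {ffun 'I_k.+1 -> 'I_k.+1}}) s t :
  (s <= t)%N -> (cnt f s <= cnt f t)%N.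
Proof.
elim: t => [|t IH]; first by rewrite leqn0 => /eqP ->.
rewrite leq_eqVlt => /orP[/eqP ->//|hs].
by apply: leq_trans (IH hs) _; rewrite /= leq_addr.
Qed.

Lemma slow_of_cnt k (hk : (3 <= k)%N) (f : {ffun 'I_(k.+1 ^ 2) -> {ffun 'I_k.+1 -> 'I_k.+1}})
  (hf : f \in pick_seqs (@GE k.+1) (k.+1 ^ 2)) :
  (cnt f ((k.+1 ^ 2).-1 %/ 8) < k.+1./2)%N -> slow_event f.
Proof.
move=> hc; apply/forallP => t; apply/implyP => ht8.
have hct : (cnt f t < k.+1./2)%N.
  apply: leq_ltn_trans hc; apply: cnt_mono.
  have h8 : (8 * t <= (k.+1 ^ 2).-1)%N by rewrite -ltnS prednK ?expn_gt0.
  by rewrite leq_divRL // mulnC.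
set c := cnt f t in hct.
have hck : (c < k)%N by lia.
apply/negP => /forallP/(_ (inord c.+1))/forallP/(_ (inord c))/implyP.
rewrite !state_cnt // !colored_col !inordK; try lia.
rewrite (minn_idPl (ltnW hct)) ltnn leqnn /= /GE !inordK; try lia.
Qed.

Theorem mainTheorem10 (n : nat) (hn : (4 <= n)%N) (heven : ~~ odd n) :
  1 - 8%:R / n%:R <= prob (@GE n) (@slow_event n).
Proof.
case: n hn heven => [//|k] hn heven.
have hk : (3 <= k)%N by lia.
have hodd : odd k by move: heven; rewrite /= negbK.
set m := k.+1./2.
have hn2 : k.+1 = (2 * m)%N.
  by have := odd_double_half k; rewrite hodd /m; lia.
have hm : (2 <= m)%N by lia.
set T := ((k.+1 ^ 2).-1 %/ 8)%N.
have hT : (T <= k.+1 ^ 2)%N by apply: leq_trans (leq_div _ _) (leq_pred _).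
have hT8 : (8 * T <= (k.+1 ^ 2).-1)%N by rewrite mulnC leq_trunc_div.
have [S1 S2] : _ /\ _ := moments hk hodd hT.
set Om := pick_seqs (@GE k.+1) (k.+1 ^ 2) in S1 S2 *.
set W := \sum_(f in Om) (1 : rat) in S1 S2.
set q := (k.+1./2)%:R^-1 : rat in S1 S2.
have eW : W = #|Om|%:R by rewrite /W sumr_const.
have Wpos : 0 < W.
  have [p0 hp0] := valid_exists k.
  rewrite eW ltr0n; apply/card_gt0P; exists [ffun _ => p0].
  by rewrite inE; apply/forallP => i; rewrite ffunE.
set M : rat := m%:R.
have Mpos : 2 <= M by rewrite /M ler_nat.
have qM : q = M^-1 by [].
set Tr : rat := T%:R.
have hTr : 2 * Tr <= M ^+ 2.
  rewrite /Tr /M -natrX -(natrM _ 2) ler_nat.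
  have : (8 * T <= 4 * m ^ 2)%N.
    apply: leq_trans hT8 _; rewrite hn2; lia.
  lia.
set mu : rat := Tr * q.
have hmu : mu <= M / 2.
  rewrite /mu qM ler_pdivrMr; last lra.
  have -> : M / 2 * M = M ^+ 2 / 2 by field.
  lra.
set Bad := \sum_(f in Om) ((m <= cnt f T)%N)%:R : rat.
have cheb : Bad * (M - mu) ^+ 2 <= W * (Tr * q - Tr * q ^+ 2).
  apply: (le_trans (y := \sum_(f in Om) ((cnt f T)%:R - mu) ^+ 2)).
    rewrite /Bad mulr_suml; apply: ler_sum => f _.
    case: leqP => h; rewrite ?mul1r ?mul0r ?sqr_ge0 //.
    have : M <= (cnt f T)%:R by rewrite /M ler_nat.
    move=> hM; rewrite ler_sqr ?subr_ge0 //; first by rewrite lerB.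
      by rewrite nnegrE; lra.
    by rewrite nnegrE; lra.
  have -> : \sum_(f in Om) ((cnt f T)%:R - mu) ^+ 2 =
      \sum_(f in Om) ((cnt f T)%:R ^+ 2) - 2 * mu * \sum_(f in Om) (cnt f T)%:R + mu ^+ 2 * W.
    rewrite !mulr_sumr -sumrB -big_split /=; apply: eq_bigr => f _; ring.
  rewrite S1 S2 /mu; rewrite le_eqVlt; apply/orP; left; apply/eqP; ring.
have Bad0 : 0 <= Bad by apply: sumr_ge0 => f _.
have hBad : Bad * M <= 4 * W.
  have h1 : M ^+ 2 / 4 <= (M - mu) ^+ 2.
    have h2 : M / 2 <= M - mu by lra.
    have h3 : 0 <= M / 2 by lra.
    have e : M ^+ 2 / 4 = (M / 2) ^+ 2 by field.
    by rewrite e ler_sqr ?nnegrE //; lra.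
  have h4 : W * (Tr * q - Tr * q ^+ 2) <= W * (M / 2).
    apply: ler_wpM2l; first exact: ltW.
    have hq : 0 <= q by rewrite qM invr_ge0; lra.
    have : Tr * q <= M / 2 by [].
    have : 0 <= Tr * q ^+ 2 by rewrite mulr_ge0 ?exprn_ge0 // /Tr ler0n.
    lra.
  have h5 : Bad * (M ^+ 2 / 4) <= W * (M / 2).
    apply: le_trans h4; apply: le_trans cheb; exact: ler_wpM2l.
  nra.
rewrite /prob -/Om.
set good := #|[set f in Om | (cnt f T < m)%N]|.
have hgood : good%:R = W - Bad.
  rewrite /good -sum1_card natr_sum eW -sumr_const /Bad -sumrB.
  rewrite [in RHS](big_mkcond (fun f => f \in Om)).
  rewrite [in LHS]big_mkcond /=; apply: eq_bigr => f _; rewrite inE.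
  by case: (f \in Om) => //=; case: leqP; rewrite ?subrr ?subr0.
have hle : (good <= #|[set f in Om | slow_event f]|)%N.
  apply: subset_leq_card; apply/subsetP => f; rewrite !inE => /andP[hf hc].
  have hf' : f \in Om by rewrite inE.
  by rewrite hf (slow_of_cnt hk hf' hc).
apply: (le_trans (y := good%:R / #|Om|%:R)); last first.
  by apply: ler_wpM2r; [rewrite invr_ge0 ler0n | rewrite ler_nat].
rewrite hgood -eW.
have hnR : (k.+1)%:R = 2 * M :> rat by rewrite hn2 natrM.
rewrite hnR ler_pdivlMr //.
have hB : Bad <= 4 * W / M by rewrite ler_pdivlMr; lra.
have hM0 : M != 0 by rewrite gt_eqF //; lra.
have -> : (1 - 8 / (2 * M)) * W = W - 4 * W / M :> rat by field.

lra.
Qed.
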